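(* For all integers $\ell\ge0$, $$P(\ell,0,\dots,0)=(1-r)\left[\frac{1+r-\sqrt{(1+r)^2-4r_1}}{2}\right]^{\ell},$$ independently of $K$ and of how $r-r_1$ is split among levels $2,\dots,K$.
   Context: Fix integers $c\ge 1$, $K\ge 2$ and reals $r_1,\dots,r_K>0$ with $r=\sum_{k=1}^K r_k<1$ (here $r_k=\lambda_k/(c\mu)$ for an M/M/$c$ queue with $K$ non-preemptive priority levels, level 1 the highest). Write $\mathbf e_\kappa$ for the standard unit vectors of $\mathbb Z^K$, $\delta_{ij}$ for the Kronecker delta. Consider the equations for $(p_{\mathbf n})_{\mathbf n\in\mathbb N_0^K}$, with the convention $p_{\mathbf n}=0$ if some component of $\mathbf n$ is negative: $$(1+r)p_{\mathbf n}=\Big(\prod_{j=1}^K\delta_{0n_j}\Big)p_{\mathbf n}+\sum_{\kappa=1}^K\Big[r_\kappa p_{\mathbf n-\mathbf e_\kappa}+\Big(\prod_{j=1}^{\kappa-1}\delta_{0n_j}\Big)p_{\mathbf n+\mathbf e_\kappa}\Big],\quad \mathbf n\in\mathbb N_0^K .$$ These are the stationary balance equations for the states in which all $c$ servers are busy and $n_\kappa$ clients of level $\kappa$ wait in the queue; their nonnegative summable solutions form a one-dimensional cone, and $P$ denotes the unique solution with $\sum_{\mathbf n}P(\mathbf n)=1$. *)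

(* Defs.v *)
From HB Require Import structures.
From mathcomp Require Import all_boot all_order all_algebra.
From mathcomp Require Import all_classical all_reals all_analysis.
Set Implicit Arguments. Unset Strict Implicit. Unset Printing Implicit Defensive.
Import Order.TTheory GRing.Theory Num.Theory.
Local Open Scope ring_scope.

(* A queue-length vector n in N_0^K, levels indexed by 'I_K
   (level 1 of the paper = index 0). *)
Notation state K := {ffun 'I_K -> nat}.

Definition st_up K (n : state K) (k : 'I_K) : state K :=
  [ffun j => (n j + (j == k))%N].
(* n - e_k (only used when n k > 0) *)
Definition st_down K (n : state K) (k : 'I_K) : state K :=
  [ffun j => (n j - (j == k))%N].

(* p_{n - e_k}, with the convention p = 0 at negative components *)
Definition p_down (R : realType) K (p : state K -> R) (n : state K) (k : 'I_K) : R :=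
  if n k == 0%N then 0 else p (st_down n k).

Definition all_zero K (n : state K) : bool := [forall j, n j == 0%N].
Definition prefix_zero K (n : state K) (k : 'I_K) : bool :=
  [forall j : 'I_K, (j < k)%N ==> (n j == 0%N)].

Definition balance (R : realType) K (rr : 'I_K -> R) (p : state K -> R) : Prop :=
  forall n : state K,
    (1 + \sum_(k < K) rr k) * p n =
      (all_zero n)%:R * p n +
      \sum_(k < K) (rr k * p_down p n k + (prefix_zero n k)%:R * p (st_up n k)).

Definition st_first K (i1 : 'I_K) (l : nat) : state K :=
  [ffun j => if j == i1 then l else 0%N].

(* Main.v *)
Require Import Defs.
From HB Require Import structures.
From mathcomp Require Import all_boot all_order all_algebra.
From mathcomp Require Import all_classical all_reals all_analysis.
From mathcomp Require Import zify ring lra.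
Set Implicit Arguments. Unset Strict Implicit. Unset Printing Implicit Defensive.
Import Order.TTheory GRing.Theory Num.Theory.
Local Open Scope ring_scope.


Section Comb.
Variable K : nat.
Implicit Types (n y : state K) (k : 'I_K).

Definition tot n : nat := (\sum_(j < K) n j)%N.
Definition zst : state K := [ffun _ => 0%N].
Definition boxL (N : nat) : seq (state K) :=
  [seq [ffun j => val (x j)] | x : {ffun 'I_K -> 'I_N.+1} <- enum {ffun 'I_K -> 'I_N.+1}].

Lemma comp_le_tot n j : (n j <= tot n)%N.
Proof. by rewrite /tot (bigD1 j) //= leq_addr. Qed.

Lemma boxL_uniq N : uniq (boxL N).
Proof.
rewrite map_inj_uniq ?enum_uniq // => x y /ffunP H; apply/ffunP => j.
by apply/val_inj; have := H j; rewrite !ffunE.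
Qed.

Lemma mem_boxL N n : (n \in boxL N) = [forall j, n j <= N]%N.
Proof.
apply/mapP/forallP => [[x _ ->] j|H].
  by rewrite ffunE -ltnS ltn_ord.
exists [ffun j => (inord (n j) : 'I_N.+1)]; first by rewrite mem_enum.
by apply/ffunP => j; rewrite !ffunE /= inordK // ltnS.
Qed.

Lemma tot_boxL N n : (tot n <= N)%N -> n \in boxL N.
Proof. by move=> H; rewrite mem_boxL; apply/forallP => j; apply: leq_trans H; apply: comp_le_tot. Qed.

Lemma tot_up n k : tot (st_up n k) = (tot n).+1.
Proof.
rewrite /tot; under eq_bigr do rewrite ffunE.
rewrite big_split /= -addn1; congr (_ + _)%N; rewrite (bigD1 k) //= eqxx big1 // => j /negbTE -> //.
Qed.

Lemma updown n k : n k != 0%N -> st_up (st_down n k) k = n.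
Proof.
move=> nk; apply/ffunP => j; rewrite !ffunE.
by case: eqP => [->|_]; rewrite ?subn0 ?addn0 // subnK // lt0n.
Qed.

Lemma downup n k : st_down (st_up n k) k = n.
Proof. by apply/ffunP => j; rewrite !ffunE addnK. Qed.

Lemma tot_down n k : n k != 0%N -> (tot (st_down n k)).+1 = tot n.
Proof. by move=> nk; rewrite -(tot_up _ k) updown. Qed.

Lemma down_boxL N n k : n \in boxL N -> st_down n k \in boxL N.
Proof.
rewrite !mem_boxL => /forallP H; apply/forallP => j; rewrite ffunE.
exact: leq_trans (leq_subr _ _) (H j).
Qed.

Lemma up_k n k : st_up n k k != 0%N.
Proof. by rewrite ffunE eqxx addn1. Qed.

Lemma prefix_up n k : prefix_zero (st_up n k) k = prefix_zero n k.
Proof.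
apply/forallP/forallP => H j; have := H j; rewrite ffunE;
by case: (ltnP j k) => //= jk; rewrite (_ : (j == k) = false) ?addn0 // ; apply/negbTE; rewrite neq_ltn jk.
Qed.

Lemma prefix_down n k : prefix_zero (st_down n k) k = prefix_zero n k.
Proof.
apply/forallP/forallP => H j; have := H j; rewrite ffunE;
by case: (ltnP j k) => //= jk; rewrite (_ : (j == k) = false) ?subn0 // ; apply/negbTE; rewrite neq_ltn jk.
Qed.

Lemma az_eq n : all_zero n = (n == zst).
Proof.
apply/forallP/eqP => [H|-> j]; last by rewrite ffunE.
by apply/ffunP => j; rewrite ffunE; apply/eqP.
Qed.

Lemma tot_lt1 n : (tot n < 1)%N = (n == zst).
Proof.
apply/idP/eqP => [H|->]; last by rewrite /tot big1 // => j; rewrite ffunE.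
apply/ffunP => j; rewrite ffunE; apply/eqP; rewrite -leqn0 -ltnS.
exact: leq_ltn_trans (comp_le_tot n j) H.
Qed.

Lemma firstnz_uniq n k k' : n k != 0%N -> prefix_zero n k ->
  n k' != 0%N -> prefix_zero n k' -> k = k'.
Proof.
move=> nk /forallP pk nk' /forallP pk'; apply/val_inj/eqP; rewrite eqn_leq.
apply/andP; split; rewrite leqNgt; apply/negP => H.
  by have := pk k'; rewrite H /= (negbTE nk').
by have := pk' k; rewrite H /= (negbTE nk).
Qed.

Lemma firstnz_ex n : n != zst -> exists k, (n k != 0%N) && prefix_zero n k.
Proof.
move=> nz.
have [j nj] : exists j, n j != 0%N.
  apply/existsP; apply: contraR nz => /existsPn H.
  by apply/eqP/ffunP => j; rewrite ffunE; apply/eqP; have := H j; rewrite negbK.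
case: (@arg_minnP _ j (fun k => n k != 0%N) (fun k => nat_of_ord k) nj) => k nk kmin.
exists k; rewrite nk /=; apply/forallP => i; apply/implyP => ik.
by apply: contraLR ik => /kmin; rewrite -leqNgt.
Qed.

Lemma tot_zst : tot zst = 0%N.
Proof. by rewrite /tot big1 // => j; rewrite ffunE. Qed.

End Comb.


Lemma reindexL (R : realType) (T : choiceType) (L : seq T) (P Q : pred T) (h g : T -> T) (F : T -> R) :
 uniq L ->
 (forall x, x \in L -> P x -> (h x \in L) && Q (h x)) ->
 (forall x, x \in L -> P x -> g (h x) = x) ->
 (forall y, y \in L -> Q y -> [&& g y \in L, P (g y) & h (g y) == y]) ->
 \sum_(x <- L | Q x) F x = \sum_(x <- L | P x) F (h x).
Proof.
move=> uL hPQ gh hg.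
rewrite big_seq_cond [RHS]big_seq_cond [LHS]bigfs //; last by move=> i /andP[->].
rewrite [RHS]bigfs //; last by move=> i /andP[->].
apply: reindex_fsbig; split.
- move=> x /=; rewrite !unfold_in /= => /andP[xL Px]; exact: hPQ.
- move=> x y /=; rewrite !mem_setE !unfold_in /= => /andP[xL Px] /andP[yL Py] hxy.
  by rewrite -(gh x xL Px) hxy gh.
- move=> y /=; rewrite !unfold_in /= => /andP[yL Qy].
  have /and3P[gL Pg /eqP hgy] := hg y yL Qy.
  by exists (g y) => //; rewrite unfold_in /= gL Pg.
Qed.



Definition U (R : realType) K (p : state K -> R) N m :=
  \sum_(n <- boxL K N | (tot n < m)%N) p n.

Section Sums.
Variables (R : realType) (K : nat) (rr : 'I_K -> R) (p : state K -> R).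
Hypothesis hbal : balance rr p.
Variable N : nat.
Local Notation L := (boxL K N).
Local Notation U := (U p N).

Lemma U0 : U 0 = 0.
Proof. by rewrite /U big_pred0. Qed.

Lemma sum_zst (F : state K -> R) m : (0 < m)%N -> (forall n, n != (zst K) -> (tot n < m)%N -> F n = 0) ->
  \sum_(n <- L | (tot n < m)%N) F n = F (zst K).
Proof.
move=> m0 HF; rewrite big_mkcond (bigD1_seq (zst K)) ?boxL_uniq //=; last first.
  by apply: tot_boxL; rewrite tot_zst.
rewrite tot_zst m0.
rewrite big1 ?addr0 // => n nz; case: ifP => // /HF; exact.
Qed.

Lemma U1 : U 1 = p (zst K).
Proof. by apply: sum_zst => // n nz; rewrite tot_lt1 (negbTE nz). Qed.

Lemma term1 m : (0 < m)%N ->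
  \sum_(n <- L | (tot n < m)%N) (all_zero n)%:R * p n = p (zst K).
Proof.
move=> m0; rewrite (sum_zst m0) ?az_eq ?eqxx ?mul1r // => n nz _.
by rewrite az_eq (negbTE nz) mul0r.
Qed.


Lemma term2 m k : (m <= N.+1)%N ->
  \sum_(n <- L | (tot n < m)%N) p_down p n k = U m.-1.
Proof.
move=> mN.
rewrite /p_down; under eq_bigr do rewrite -if_neg.
rewrite -big_mkcondr /U.
rewrite (@reindexL _ _ L (fun y => tot y < m.-1)%N (fun n => (tot n < m)%N && (n k != 0%N)) (fun y => st_up y k) (fun y => st_down y k) (fun n => p (st_down n k))).
- by apply: eq_bigr => y _; rewrite downup.
- exact: boxL_uniq.
- move=> y yL yP; rewrite tot_up up_k tot_boxL ?tot_up /=; lia.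
- by move=> y _ _; rewrite downup.
- move=> y yL /andP[yP yk]; rewrite down_boxL // updown // eqxx /=.
  have := tot_down yk; lia.
Qed.

Lemma term3 m k : (m <= N)%N ->
  \sum_(n <- L | (tot n < m)%N) (prefix_zero n k)%:R * p (st_up n k) =
  \sum_(y <- L | [&& (tot y < m.+1)%N, y k != 0%N & prefix_zero y k]) p y.
Proof.
move=> mN.
have E n : (prefix_zero n k)%:R * p (st_up n k) = if prefix_zero n k then p (st_up n k) else 0.
  by case: prefix_zero; rewrite ?mul1r ?mul0r.
under eq_bigr do rewrite E.
rewrite -big_mkcondr /=.
rewrite (@reindexL _ _ L (fun y => (tot y < m)%N && prefix_zero y k) (fun y => [&& (tot y < m.+1)%N, y k != 0%N & prefix_zero y k]) (fun y => st_up y k) (fun y => st_down y k) p) //.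
- exact: boxL_uniq.
- move=> y yL /andP[yP yk]; rewrite tot_up up_k prefix_up yk tot_boxL ?tot_up /=; lia.
- by move=> y _ _; rewrite downup.
- move=> y yL /and3P[yP yk pk]; rewrite down_boxL // updown // eqxx prefix_down pk /=.
  have := tot_down yk; lia.
Qed.

Lemma term3b m :
  \sum_(k < K) \sum_(y <- L | [&& (tot y < m.+1)%N, y k != 0%N & prefix_zero y k]) p y =
  U m.+1 - p (zst K).
Proof.
under eq_bigr do rewrite big_mkcondr.
rewrite exchange_big /=.
have -> : U m.+1 = p (zst K) + \sum_(y <- L | (tot y < m.+1)%N) (if y != zst K then p y else 0).
  rewrite /U big_mkcond (bigD1_seq (zst K)) ?boxL_uniq ?tot_boxL ?tot_zst //=.
  congr (_ + _); rewrite big_mkcond [RHS]big_mkcond; apply: eq_bigr => i _.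
  by do 2 case: ifP.
rewrite addrAC subrr add0r; apply: eq_bigr => y _.
case: eqP => [->|/eqP nz].
  by rewrite big1 // => k _; rewrite ffunE eqxx.
have [k0 /andP[nk0 pk0]] := firstnz_ex nz.
rewrite -big_mkcond (eq_bigl (fun k => k == k0)) ?big_pred1_eq //.
move=> k; apply/andP/eqP => [[nk pk]|->]; last by [].
exact: firstnz_uniq nk pk nk0 pk0.
Qed.


Lemma U_rec m : (0 < m)%N -> (m <= N)%N ->
  (1 + \sum_(k < K) rr k) * U m =
  p (zst K) + (\sum_(k < K) rr k) * U m.-1 + (U m.+1 - p (zst K)).
Proof.
move=> m0 mN.
have E : \sum_(n <- L | (tot n < m)%N) ((1 + \sum_(k < K) rr k) * p n) =
  \sum_(n <- L | (tot n < m)%N) ((all_zero n)%:R * p n + \sum_(k < K)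
     (rr k * p_down p n k + (prefix_zero n k)%:R * p (st_up n k))).
  by apply: eq_bigr => n _; apply: hbal.
rewrite -mulr_sumr in E; rewrite /U E big_split /= term1 //.
under eq_bigr do rewrite big_split /=.
rewrite big_split /=.
have -> : \sum_(n <- L | (tot n < m)%N) \sum_(k < K) rr k * p_down p n k =
   (\sum_(k < K) rr k) * U m.-1.
  rewrite exchange_big mulr_suml; apply: eq_bigr => k _.
  by rewrite -mulr_sumr term2 //; apply: leqW.
have -> : \sum_(n <- L | (tot n < m)%N) \sum_(k < K) (prefix_zero n k)%:R * p (st_up n k) =
   U m.+1 - p (zst K).
  rewrite exchange_big -(term3b m) /=; apply: eq_bigr => k _.
  by rewrite term3.
by rewrite addrA.
Qed.


Lemma U_diff m : (m <= N)%N -> U m.+1 - U m = (\sum_(k < K) rr k) ^+ m * p (zst K).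
Proof.
elim: m => [_|m IH mN]; first by rewrite U1 U0 subr0 expr0 mul1r.
have E := U_rec (ltn0Sn m) mN; rewrite /= in E.
have IH' := IH (ltnW mN).
set r := \sum_(k < K) rr k in E IH' *.
have -> : U m.+2 - U m.+1 = r * (U m.+1 - U m) by lra.
by rewrite IH' exprS mulrA.
Qed.

Lemma U_geo M : (M <= N.+1)%N -> U M = p (zst K) * \sum_(i < M) (\sum_(k < K) rr k) ^+ i.
Proof.
elim: M => [_|M IH MN]; first by rewrite U0 big_ord0 mulr0.
rewrite big_ord_recr /= mulrDr -IH ?(ltnW MN) // (mulrC (p _)) -(U_diff MN).
by rewrite addrC subrK.
Qed.

End Sums.


Lemma bernoulli (R : realType) (h : R) n : 0 <= h -> 1 + n%:R * h <= (1 + h) ^+ n.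
Proof.
move=> h0; elim: n => [|n IH]; first by rewrite mul0r addr0 expr0.
rewrite exprS -natr1 mulrDl mul1r.
have H : 0 <= (1 + h) by lra.
have := ler_wpM2l H IH; have := ler0n R n; nra.
Qed.

Lemma grow (R : realType) (h C : R) : 0 < h -> exists n, C < (1 + h) ^+ n.
Proof.
move=> h0; exists (Num.Def.archi_bound (`|C| / h)).
have := @archi_boundP R (`|C| / h) (divr_ge0 (normr_ge0 _) (ltW h0)).
set n := Num.Def.archi_bound _ => Hn.
have := bernoulli n (ltW h0).
have : `|C| < n%:R * h by rewrite -ltr_pdivrMr.
have := ler_norm C; lra.
Qed.

Lemma geo (R : realType) (r : R) M : (1 - r) * \sum_(i < M) r ^+ i = 1 - r ^+ M.
Proof.
elim: M => [|M IH]; first by rewrite big_ord0 mulr0 expr0 subrr.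
by rewrite big_ord_recr /= mulrDr IH exprS; ring.
Qed.

Section Main.
Variables (R : realType) (K : nat) (hK : (2 <= K)%N)
  (rr : 'I_K -> R) (hr : forall k, 0 < rr k) (hr1 : \sum_(k < K) rr k < 1)
  (i1 : 'I_K) (hi1 : val i1 = 0%N)
  (p : {ffun 'I_K -> nat} -> R)
  (hp0 : forall n, 0 <= p n)
  (hsum : (\esum_(n in [set: {ffun 'I_K -> nat}]) (p n)%:E)%E = 1%E)
  (hbal : balance rr p).

Local Notation r := (\sum_(k < K) rr k).

Lemma seq_le1 (s : seq (state K)) : uniq s -> \sum_(n <- s) p n <= 1.
Proof.
move=> us; rewrite -lee_fin -hsum fsbig_seq // -fsumEFin ?finite_seq //.
apply: esum_ge; exists [set` s]%classic => //; split => //; exact: finite_seq.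
Qed.

Lemma U_le1 N m : U p N m <= 1.
Proof. by rewrite /U -big_filter; apply: seq_le1; rewrite filter_uniq ?boxL_uniq. Qed.

Lemma p_le1 n : p n <= 1.
Proof. by have := @seq_le1 [:: n] isT; rewrite big_seq1. Qed.

Lemma r_pos : 0 < r.
Proof. by rewrite (bigD1 i1) //= ltr_wpDr ?hr // sumr_ge0 // => k _; apply: ltW; exact: hr. Qed.

Lemma r1_lt : rr i1 < r.
Proof.
rewrite (bigD1 i1) //= ltrDl.
have k1 : (1 < K)%N by [].
have ne : Ordinal k1 != i1 by apply/eqP => /(congr1 val); rewrite hi1.
rewrite (bigD1 (Ordinal k1)) //= ltr_wpDr ?hr // sumr_ge0 // => k _; apply: ltW; exact: hr.
Qed.

Lemma geo_le M : p (zst K) * \sum_(i < M) r ^+ i <= p (zst K) / (1 - r).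
Proof.
have r0 := r_pos.
rewrite ler_wpM2l ?hp0 // -(@ler_pM2l _ (1 - r)) ?subr_gt0 // mulfV ?geo; last by rewrite subr_eq0; apply/eqP => E; move: hr1; rewrite -E ltxx.
by rewrite lerBlDr lerDl exprn_ge0 // ltW.
Qed.

Lemma pz_ge : 1 - r <= p (zst K).
Proof.
have r0 := r_pos.
have : (1 <= (p (zst K) / (1 - r))%:E)%E.
  rewrite -hsum; apply: ge_ereal_sup => /= _ [X [finX _] <-].
  pose s : seq (state K) := finmap.enum_fset (fset_set X).
  pose N := (\max_(n <- s) tot n)%N.
  pose B := [set` [seq n <- boxL K N | (tot n < N.+1)%N]]%classic.
  apply: (@le_trans _ _ (\sum_(i \in B) (p i)%:E)%E).
    apply: lee_fsum_nneg_subset => //; first exact: finite_seq.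
      move=> x; rewrite /B !mem_setE mem_filter => Xx.
      have xs : x \in s by rewrite in_fset_set // mem_setE.
      have := @leq_bigmax_seq _ s xpredT (@tot K) x xs isT; rewrite -/N => xN.
      by rewrite ltnS xN tot_boxL.
    by move=> t _; rewrite lee_fin.
  rewrite fsumEFin; last exact: finite_seq.
  rewrite /B -fsbig_seq ?filter_uniq ?boxL_uniq //.
  by rewrite big_filter -/(U p N N.+1) (U_geo hbal) // lee_fin geo_le.
by rewrite lee_fin ler_pdivlMr ?subr_gt0 // mul1r.
Qed.

Lemma pz_eq : p (zst K) = 1 - r.
Proof.
have r0 := r_pos.
apply/eqP; rewrite eq_le pz_ge andbT; rewrite leNgt; apply/negP => H.
set d := p (zst K) - (1 - r).
have d0 : 0 < d by rewrite subr_gt0.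
have Hd M : d <= p (zst K) * r ^+ M.
  have := U_le1 M M; rewrite (U_geo hbal) //.
  have := geo r M => G Hle.
  have : (1 - r) * (p (zst K) * \sum_(i < M) r ^+ i) <= (1 - r) * 1.
    by rewrite ler_wpM2l // subr_ge0 ltW.
  rewrite mulrCA G /d; nra.
have rV : 0 < r^-1 - 1 by rewrite subr_gt0 invf_gt1.
have [M HM] := grow (p (zst K) / d) rV.
move: HM; rewrite addrC subrK => HM.
have e : r ^+ M * r^-1 ^+ M = 1 by rewrite -exprMn mulfV ?gt_eqF // expr1n.
have := Hd M.
have pd : p (zst K) = d * (p (zst K) / d) by rewrite mulrCA mulfV ?gt_eqF // mulr1.
have q0 : 0 < r^-1 ^+ M by rewrite exprn_gt0 // invr_gt0.
move=> Hle.
have := ler_wpM2r (ltW q0) Hle; rewrite -mulrA e mulr1 => H2.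
by move: HM; rewrite -(ltr_pM2l d0) -pd => /lt_le_trans/(_ H2); rewrite ltxx.
Qed.

Lemma st_first0 : st_first i1 0 = zst K.
Proof. by apply/ffunP => j; rewrite !ffunE; case: ifP. Qed.

Lemma st_first_down l : st_down (st_first i1 l.+1) i1 = st_first i1 l.
Proof. by apply/ffunP => j; rewrite !ffunE; case: eqP => //= _; rewrite subn1. Qed.

Lemma st_first_up l : st_up (st_first i1 l) i1 = st_first i1 l.+1.
Proof. by apply/ffunP => j; rewrite !ffunE; case: eqP => //= _; rewrite addn1. Qed.

Lemma a_rec l : (1 + r) * p (st_first i1 l.+1) =
  rr i1 * p (st_first i1 l) + p (st_first i1 l.+2).
Proof.
rewrite hbal az_eq (_ : (st_first i1 l.+1 == zst K) = false); last first.
  by apply/negbTE/eqP => /ffunP/(_ i1); rewrite !ffunE eqxx.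
rewrite mul0r add0r (bigD1 i1) //= big1 ?addr0.
- rewrite /p_down ffunE eqxx /= st_first_down st_first_up.
  rewrite (_ : prefix_zero _ i1 = true) ?mul1r //.
  by apply/forallP => j; rewrite hi1 ltn0.
- move=> k kn.
  have k0 : (0 < val k)%N.
    by rewrite lt0n; apply: contra kn => /eqP kz; apply/eqP/val_inj; rewrite /= kz hi1.
  rewrite /p_down ffunE (negbTE kn) eqxx mulr0 add0r.
  rewrite (_ : prefix_zero _ k = false) ?mul0r //.
  apply/negbTE/negP => /forallP/(_ i1); rewrite hi1 k0 /= ffunE eqxx.
  done.
Qed.

Lemma line l : p (st_first i1 l) =
  (1 - r) * ((1 + r - Num.sqrt ((1 + r) ^+ 2 - 4 * rr i1)) / 2) ^+ l.
Proof.
have r0 := r_pos; have r1l := r1_lt; have r1p := hr i1.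
have hr1' : r < 1 by exact: hr1.
set D := (1 + r) ^+ 2 - 4 * rr i1.
have hD : (1 - r) ^+ 2 < D by rewrite /D; nra.
have D0 : 0 <= D by apply: le_trans (ltW hD); apply: sqr_ge0.
set s := Num.sqrt D.
have hs : s ^+ 2 = D by rewrite sqr_sqrtr.
have s0 : 0 <= s by apply: sqrtr_ge0.
have s1 : 1 - r < s by nra.
set z1 := (1 + r - s) / 2.
set z2 := (1 + r + s) / 2.
have hz12 : z1 + z2 = 1 + r by rewrite /z1 /z2; field => //.
have hz : z1 * z2 = rr i1.
  rewrite /z1 /z2 (_ : rr i1 = ((1 + r) ^+ 2 - D) / 4); last by rewrite /D; field => //.
  rewrite -hs; field => //.
have z2g : 1 < z2 by rewrite /z2; lra.
have z1p : 0 < z1.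
  have z2p : 0 < z2 by lra.
  have := hz; have := hr i1; nra.
have z1l : z1 < 1 by lra.
pose a m := p (st_first i1 m).
pose b m := a m.+1 - z1 * a m.
have hb m : b m.+1 = z2 * b m.
  rewrite /b /a.
  have E := a_rec m.
  have -> : p (st_first i1 m.+2) = (z1 + z2) * p (st_first i1 m.+1) - z1 * z2 * p (st_first i1 m).
    by rewrite hz12 hz; lra.
  ring.
have hbn m : b m = z2 ^+ m * b 0.
  by elim: m => [|m IH]; rewrite ?expr0 ?mul1r // hb IH exprS mulrA.
have bb m : `|b m| <= 1.
  have := hp0 (st_first i1 m); have := hp0 (st_first i1 m.+1).
  have := p_le1 (st_first i1 m); have := p_le1 (st_first i1 m.+1).
  rewrite /b /a => *; rewrite ler_norml; apply/andP; split; nra.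
have b0 : b 0 = 0.
  apply/eqP; apply: contraT => nb.
  have nb0 : 0 < `|b 0| by rewrite normr_gt0.
  have z21 : 0 < z2 - 1 by lra.
  have [n Hn] := grow (`|b 0|^-1) z21.
  move: Hn; rewrite addrC subrK => Hn.
  have := bb n; rewrite hbn normrM (ger0_norm (exprn_ge0 _ (ltW (lt_trans ltr01 z2g)))).
  have ib : 0 < `|b 0|^-1 by rewrite invr_gt0.
  rewrite -(ler_pM2r ib) -mulrA mulfV ?gt_eqF // mulr1 mul1r.
  by rewrite leNgt Hn.
have ha m : a m = z1 ^+ m * a 0.
  elim: m => [|m IH]; first by rewrite expr0 mul1r.
  have : b m = 0 by rewrite hbn b0 mulr0.
  rewrite /b => /eqP; rewrite subr_eq0 => /eqP ->.
  by rewrite IH exprS mulrA.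
rewrite -/(a l) ha /a st_first0 pz_eq mulrC.
by [].
Qed.

End Main.

Theorem mainTheorem7 (R : realType) (K : nat) (hK : (2 <= K)%N)
  (rr : 'I_K -> R) (hr : forall k, 0 < rr k) (hr1 : \sum_(k < K) rr k < 1)
  (i1 : 'I_K) (hi1 : val i1 = 0%N)
  (p : {ffun 'I_K -> nat} -> R)
  (hp0 : forall n, 0 <= p n)
  (hsum : (\esum_(n in [set: {ffun 'I_K -> nat}]) (p n)%:E)%E = 1%E)
  (hbal : balance rr p)
  (l : nat) :
  p (st_first i1 l) =
    (1 - \sum_(k < K) rr k) *
    ((1 + \sum_(k < K) rr k
      - Num.sqrt ((1 + \sum_(k < K) rr k) ^+ 2 - 4 * rr i1)) / 2) ^+ l.
Proof. exact: (line hK hr hr1 hi1 hp0 hsum hbal l). Qed.
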